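(* Consider an EF neuron as in the context. Suppose (1) all input spikes are received within the input time window, i.e. $\mathcal F_i^{in}\subseteq\{0,\ldots,T^{in}-1\}$ for all $i\in\Gamma$, and (2) the neuron fires no output spike before the beginning of its output time window, i.e. $\mathcal F^{out}\cap\{0,\ldots,T^{in}-2\}=\emptyset$. For each $i\in\Gamma$ let $\tilde a_i=\sum_{t\in\mathcal F_i^{in}}2^{e^{in}_{max}-t}$ be the value encoded by the $i$-th input LTC spike train, and let $y=\max\big(\sum_{i\in\Gamma}w_i\tilde a_i,\,0\big)$ (the output of an analog ReLU neuron with inputs $\tilde a_i$ and weights $w_i$). Let $S\subseteq\{0,\ldots,T^{out}-1\}$ be the set of spike times of the LTC spike train of $y$ with output exponent range $\{e^{out}_{min},\ldots,e^{out}_{max}\}$ (multi-spike LTC for a multi-spike EF neuron, single-spike LTC for a single-spike EF neuron). Then $\mathcal F^{out}\cap\{T^{in}-1,\ldots,T^{in}+T^{out}-2\}=\{T^{in}-1+s: s\in S\}$.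
   Context: Exponentiate-and-Fire (EF) neuron (discrete time $t\in\mathbb Z$). Fix integers $e^{in}_{min}\le e^{in}_{max}$ (input exponent range), $T^{in}=e^{in}_{max}-e^{in}_{min}+1$ (input time window $\{0,\ldots,T^{in}-1\}$), and integers $e^{out}_{min}\le e^{out}_{max}$ (output exponent range), $T^{out}=e^{out}_{max}-e^{out}_{min}+1$. The output time window is $\{T^{in}-1,\ldots,T^{in}+T^{out}-2\}$. The firing threshold is $V_{th}=2^{e^{out}_{max}}$. The neuron has a finite set $\Gamma$ of synapses with real weights $w_i$, and for each $i\in\Gamma$ a finite set $\mathcal F_i^{in}\subseteq\{0,1,2,\ldots\}$ of input spike times. PSP kernel: $\epsilon(s)=2^{e^{in}_{min}}\cdot 2^{s}\cdot\mathbb 1(s\ge 0)$; total PSP $h_i(t)=\sum_{t^{in}\in\mathcal F_i^{in}}\epsilon(t-t^{in})$. With $\mathcal F^{out}\subseteq\mathbb Z$ the set of output spike times and $\eta$ the afterhyperpolarizing kernel, the membrane potential is $V_m(t)=\sum_{i\in\Gamma}w_i h_i(t)+\sum_{t^{out}\in\mathcal F^{out}}\eta(t-t^{out})\,\mathbb 1(t\ge t^{out})$ and the pre-reset membrane potential is $V_m^-(t)=V_m(t)-\eta(0)\,\mathbb 1(t\in\mathcal F^{out})$ (which depends only on output spikes at times $<t$). Output spikes are generated recursively in time: $t\in\mathcal F^{out}$ if and only if $V_m^-(t)\ge V_{th}$ (so no output spikes occur at negative times, where $V_m^-=0$). For a multi-spike EF neuron, the output spike at $t^{out}$ contributes $\eta(s)=-V_{th}\cdot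 2^{s}$ (reset by subtraction); for a single-spike EF neuron it contributes $\eta(s)=-V_m^-(t^{out})\cdot 2^{s}$ (reset to zero). Logarithmic approximation and LTC, for integers $e_{min}\le e_{max}$ and real $a$: the multi-power LA is $\tilde a=0$ if $a<2^{e_{min}}$, $\tilde a=\lfloor a/2^{e_{min}}\rfloor 2^{e_{min}}$ if $2^{e_{min}}\le a<2^{e_{max}+1}$, $\tilde a=2^{e_{max}+1}-2^{e_{min}}$ if $a\ge 2^{e_{max}+1}$. The single-power LA is $\tilde a=0$ if $a<2^{e_{min}}$, $\tilde a=2^{\lfloor\log_2 a\rfloor}$ if $2^{e_{min}}\le a<2^{e_{max}+1}$, $\tilde a=2^{e_{max}}$ if $a\ge 2^{e_{max}+1}$. Writing $\tilde a=\sum_{e\in E}2^e$ with distinct $E\subseteq\{e_{min},\ldots,e_{max}\}$, the LTC spike train of $a$ is the set of spike times $\{e_{max}-e: e\in E\}\subseteq\{0,\ldots,e_{max}-e_{min}\}$; it is called multi-spike LTC when multi-power LA is used and single-spike LTC when single-power LA is used. Conversely, a spike at time $t$ of an LTC spike train with exponent range $\{e_{min},\ldots,e_{max}\}$ represents $2^{e_{max}-t}$, and the train encodes the sum of these powers. *)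

(* Defs.v *)
From Stdlib Require Import Reals List ZArith.
Open Scope R_scope.

Definition rsum {A : Type} (f : A -> R) (l : list A) : R :=
  fold_right (fun x acc => f x + acc) 0 l.

Definition pow2 (z : Z) : R := powerRZ 2 z.

Definition Tin (einmin einmax : Z) : nat := Z.to_nat (einmax - einmin + 1).
Definition Tout (eoutmin eoutmax : Z) : nat := Z.to_nat (eoutmax - eoutmin + 1).

Definition psp (einmin : Z) (s : Z) : R :=
  if (0 <=? s)%Z then pow2 einmin * pow2 s else 0.

Definition h_psp (einmin : Z) (Fi : list nat) (t : nat) : R :=
  rsum (fun tin => psp einmin (Z.of_nat t - Z.of_nat tin)) Fi.

(* synaptic part of the membrane potential: sum_{i in Gamma} w_i h_i(t),
   with Gamma = {0,...,n-1} *)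
Definition Vsyn (einmin : Z) (n : nat) (w : nat -> R) (Fin : nat -> list nat)
  (t : nat) : R :=
  rsum (fun i => w i * h_psp einmin (Fin i) t) (seq 0 n).

Inductive ef_kind := MultiSpike | SingleSpike.

(* potential at time t given a history of earlier output spikes (t_out, c),
   each contributing eta(s) = - c * 2^s with s = t - t_out *)
Definition Vpre_of (Vs : nat -> R) (hs : list (nat * R)) (t : nat) : R :=
  Vs t + rsum (fun p => - snd p * pow2 (Z.of_nat t - Z.of_nat (fst p))) hs.

(* out_hist k Vth Vs t = list of output spikes at times < t, together with
   their afterhyperpolarization amplitude (Vth for multi-spike: reset by
   subtraction; V_m^-(t_out) for single-spike: reset to zero). *)
Fixpoint out_hist (k : ef_kind) (Vth : R) (Vs : nat -> R) (t : nat)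
  : list (nat * R) :=
  match t with
  | O => nil
  | S t' =>
      let hs := out_hist k Vth Vs t' in
      let v := Vpre_of Vs hs t' in
      if Rle_dec Vth v
      then hs ++ ((t', match k with MultiSpike => Vth | SingleSpike => v end) :: nil)
      else hs
  end.

(* pre-reset membrane potential V_m^-(t) (depends on output spikes < t) *)
Definition Vpre (k : ef_kind) (Vth : R) (Vs : nat -> R) (t : nat) : R :=
  Vpre_of Vs (out_hist k Vth Vs t) t.

Definition ef_fires (k : ef_kind) (einmin eoutmax : Z) (n : nat)
  (w : nat -> R) (Fin : nat -> list nat) (t : nat) : Prop :=
  pow2 eoutmax <= Vpre k (pow2 eoutmax) (Vsyn einmin n w Fin) t.

(* floor is Int_part; floor(log2 a) is Int_part (ln a / ln 2) *)
Definition LA_multi (emin emax : Z) (a : R) : R :=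
  if Rlt_dec a (pow2 emin) then 0
  else if Rlt_dec a (pow2 (emax + 1))
  then IZR (Int_part (a / pow2 emin)) * pow2 emin
  else pow2 (emax + 1) - pow2 emin.

Definition LA_single (emin emax : Z) (a : R) : R :=
  if Rlt_dec a (pow2 emin) then 0
  else if Rlt_dec a (pow2 (emax + 1))
  then pow2 (Int_part (ln a / ln 2))
  else pow2 emax.

Definition LA (k : ef_kind) : Z -> Z -> R -> R :=
  match k with MultiSpike => LA_multi | SingleSpike => LA_single end.

(* S is the LTC spike train of a: S is a set of distinct times in
   {0,...,emax-emin} with  LA(a) = sum_{s in S} 2^(emax - s)
   (i.e. S = {emax - e : e in E} for the representation LA(a) = sum_{e in E} 2^e) *)
Definition is_LTC (k : ef_kind) (emin emax : Z) (a : R) (S : list nat) : Prop :=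
  NoDup S /\
  (forall s, In s S -> (Z.of_nat s <= emax - emin)%Z) /\
  rsum (fun s => pow2 (emax - Z.of_nat s)) S = LA k emin emax a.

Definition LTC_decode (emax : Z) (F : list nat) : R :=
  rsum (fun t => pow2 (emax - Z.of_nat t)) F.

Definition relu_out (einmax : Z) (n : nat) (w : nat -> R) (Fin : nat -> list nat) : R :=
  Rmax (rsum (fun i => w i * LTC_decode einmax (Fin i)) (seq 0 n)) 0.

(* Main.v *)
Require Import Defs.
From Stdlib Require Import Reals List ZArith Lia Lra.
Open Scope R_scope.

Lemma pow2_pos z : 0 < pow2 z.
Proof. unfold pow2; apply powerRZ_lt; lra. Qed.

Lemma pow2_add a b : pow2 (a + b) = pow2 a * pow2 b.
Proof. unfold pow2; apply powerRZ_add; lra. Qed.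

Lemma pow2_R z : pow2 z = Rpower 2 (IZR z).
Proof. unfold pow2; apply powerRZ_Rpower; lra. Qed.

Lemma pow2_le a b : (a <= b)%Z -> pow2 a <= pow2 b.
Proof. intros; rewrite !pow2_R; apply Rle_Rpower; [lra| apply IZR_le; auto]. Qed.

Lemma pow2_lt a b : (a < b)%Z -> pow2 a < pow2 b.
Proof. intros; rewrite !pow2_R; apply Rpower_lt; [lra| apply IZR_lt; auto]. Qed.

Lemma pow2_1 : pow2 1 = 2.
Proof. unfold pow2; simpl; lra. Qed.

Lemma pow2_S z : pow2 (z + 1) = 2 * pow2 z.
Proof. rewrite pow2_add, pow2_1; lra. Qed.

Lemma rsum_app {A} (f : A -> R) l m : rsum f (l ++ m) = rsum f l + rsum f m.
Proof. induction l; simpl; [lra|rewrite IHl; lra]. Qed.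

Lemma rsum_ext_in {A} (f g : A -> R) l : (forall x, In x l -> f x = g x) -> rsum f l = rsum g l.
Proof. induction l; simpl; intros H; auto. rewrite H, IHl; auto. Qed.

Lemma rsum_plus {A} (f g : A -> R) l : rsum (fun x => f x + g x) l = rsum f l + rsum g l.
Proof. induction l; simpl; [lra|rewrite IHl; lra]. Qed.

Lemma rsum_scale {A} (c : R) (f : A -> R) l : rsum (fun x => c * f x) l = c * rsum f l.
Proof. induction l; simpl; [lra|rewrite IHl; lra]. Qed.

Lemma rsum_nonneg {A} (f : A -> R) l : (forall x, 0 <= f x) -> 0 <= rsum f l.
Proof. induction l; simpl; intros H; [lra|]. pose proof (H a); pose proof (IHl H); lra. Qed.

Lemma rsum_ge_elem {A} (f : A -> R) l a : (forall x, 0 <= f x) -> In a l -> f a <= rsum f l.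
Proof. induction l; simpl; intros H Hi; [contradiction|]. destruct Hi as [<-|Hi].
 - pose proof (rsum_nonneg f l H); lra.
 - specialize (IHl H Hi); specialize (H a0); lra. Qed.

Lemma rsum_incl_le (f : nat -> R) (l m : list nat) :
  (forall x, 0 <= f x) -> NoDup l -> NoDup m ->
  (forall x, In x l -> f x = 0 \/ In x m) -> rsum f l <= rsum f m.
Proof.
  intros Hf; revert m; induction l as [|a l IH]; intros m Hl Hm Hin; simpl.
  - apply rsum_nonneg; auto.
  - inversion Hl; subst.
    destruct (Hin a (or_introl eq_refl)) as [Z|Ia].
    + rewrite Z. rewrite Rplus_0_l. apply IH; auto. intros; apply Hin; simpl; auto.
    + destruct (in_split _ _ Ia) as (m1 & m2 & ->).
      rewrite rsum_app; simpl. assert (rsum f l <= rsum f (m1 ++ m2)).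
      { apply IH; auto. eapply NoDup_remove_1; eauto.
        intros x Hx. destruct (Hin x (or_intror Hx)) as [?|Hx']; auto.
        right. apply in_app_or in Hx'. apply in_or_app. destruct Hx' as [?|[<-|?]]; auto.
        contradiction. }
      rewrite rsum_app in H; lra.
Qed.

Lemma rsum_eq_in (f : nat -> R) l j : NoDup l -> In j l ->
  rsum (fun s => if Nat.eqb s j then f s else 0) l = f j.
Proof.
  induction l as [|a l IH]; simpl; intros Hn Hi; [contradiction|]. inversion Hn; subst.
  destruct Hi as [<-|Hi].
  - rewrite Nat.eqb_refl. rewrite (rsum_ext_in _ (fun _ => 0)). 
    + clear. induction l; simpl; lra.
    + intros x Hx. destruct (Nat.eqb_spec x a); subst; auto; contradiction.
  - destruct (Nat.eqb_spec a j); subst; [contradiction|]. rewrite IH; auto; lra.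
Qed.

Lemma rsum_eq_nin (f : nat -> R) l j : ~ In j l ->
  rsum (fun s => if Nat.eqb s j then f s else 0) l = 0.
Proof.
  induction l as [|a l IH]; simpl; intros Hi; [lra|].
  destruct (Nat.eqb_spec a j); subst. { exfalso; auto. } rewrite IH; auto; lra.
Qed.

Lemma rsum_cons {A} (f : A -> R) a l : rsum f (a :: l) = f a + rsum f l.
Proof. reflexivity. Qed.

Lemma geom emax a len :
  rsum (fun s => pow2 (emax - Z.of_nat s)) (seq a len) =
  pow2 (emax - Z.of_nat a + 1) - pow2 (emax - Z.of_nat a - Z.of_nat len + 1).
Proof.
  revert a; induction len; intros a.
  - simpl rsum. change (Z.of_nat 0) with 0%Z. rewrite (Z.sub_0_r (emax - Z.of_nat a)); lra.
  - change (seq a (S len)) with (a :: seq (S a) len). rewrite rsum_cons.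
    rewrite IHlen. replace (emax - Z.of_nat (S a) + 1)%Z with (emax - Z.of_nat a)%Z by lia.
    replace (emax - Z.of_nat (S a) - Z.of_nat len + 1)%Z with (emax - Z.of_nat a - Z.of_nat (S len) + 1)%Z by lia.
    rewrite (pow2_S (emax - Z.of_nat a)). lra.
Qed.

Definition fpw (emax : Z) (s : nat) : R := pow2 (emax - Z.of_nat s).

Fixpoint umulti (emax : Z) (A : R) (j : nat) : R :=
  match j with
  | O => A
  | S j' => let u := umulti emax A j' in
      if Rle_dec (pow2 (emax - Z.of_nat j')) u then u - pow2 (emax - Z.of_nat j') else u
  end.

Lemma rsum_zero {B} (l : list B) : rsum (fun _ => 0) l = 0.
Proof. induction l; simpl; lra. Qed.

Section Core.
Variables (emin emax : Z) (D : nat) (Sl : list nat) (A : R).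
Hypothesis HD : Z.of_nat D = (emax - emin)%Z.
Hypothesis HN : NoDup Sl.
Hypothesis HB : forall s, In s Sl -> (s <= D)%nat.
Hypothesis HE : 0 <= A - rsum (fpw emax) Sl < pow2 emin.

Definition Pj j := rsum (fun s => if Nat.ltb s j then fpw emax s else 0) Sl.

Lemma fire_char j u : (j <= D)%nat -> u = A - Pj j ->
  (pow2 (emax - Z.of_nat j) <= u <-> In j Sl).
Proof.
  intros Hj ->.
  set (Q := rsum (fun s => if Nat.ltb s j then 0 else fpw emax s) Sl).
  assert (HT : rsum (fpw emax) Sl = Pj j + Q).
  { unfold Pj, Q; rewrite <- rsum_plus. apply rsum_ext_in; intros x _.
    destruct (Nat.ltb x j); lra. }
  assert (Hf : forall x, 0 <= fpw emax x) by (intros; apply Rlt_le, pow2_pos).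
  split.
  - intros Hle. destruct (in_dec Nat.eq_dec j Sl) as [|Hn]; auto. exfalso.
    assert (HQ : Q = rsum (fun s => if Nat.ltb j s then fpw emax s else 0) Sl).
    { unfold Q; apply rsum_ext_in; intros x Hx.
      destruct (Nat.ltb_spec x j); destruct (Nat.ltb_spec j x); try lia; auto.
      assert (x = j) by lia; subst; contradiction. }
    assert (Hm : Q <= rsum (fpw emax) (seq (S j) (D - j))).
    { rewrite HQ. eapply Rle_trans.
      - apply (rsum_incl_le _ Sl (seq (S j) (D - j))); auto.
        + intros x; destruct (Nat.ltb j x); auto; lra.
        + apply seq_NoDup.
        + intros x Hx. destruct (Nat.ltb_spec j x); auto. right. apply in_seq.
          specialize (HB x Hx). lia.
      - right. apply rsum_ext_in. intros x Hx. apply in_seq in Hx.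
        destruct (Nat.ltb_spec j x); auto; lia. }
    unfold fpw in Hm. rewrite geom in Hm.
    replace (emax - Z.of_nat (S j) + 1)%Z with (emax - Z.of_nat j)%Z in Hm by lia.
    replace (emax - Z.of_nat (S j) - Z.of_nat (D - j) + 1)%Z with emin in Hm by lia.
    lra.
  - intros Hi. assert (fpw emax j <= Q).
    { unfold Q. replace (fpw emax j) with
        ((fun s => if Nat.ltb s j then 0 else fpw emax s) j).
      - apply (rsum_ge_elem (fun s => if Nat.ltb s j then 0 else fpw emax s)); auto. intros x; destruct (Nat.ltb x j); auto; lra.
      - simpl. rewrite Nat.ltb_irrefl. auto. }
    unfold fpw in H. lra.
Qed.

Lemma umulti_inv j : (j <= S D)%nat -> umulti emax A j = A - Pj j.
Proof.
  induction j; intros Hj.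
  - unfold Pj. simpl umulti. rewrite (rsum_ext_in (fun s => if Nat.ltb s 0 then fpw emax s else 0) (fun _ => 0)).
    + rewrite rsum_zero; lra.
    + intros x _. destruct x; reflexivity.
  - assert (HPS : Pj (S j) = Pj j + rsum (fun s => if Nat.eqb s j then fpw emax s else 0) Sl).
    { unfold Pj. rewrite <- rsum_plus. apply rsum_ext_in; intros x _.
      destruct (Nat.ltb_spec x (S j)); destruct (Nat.ltb_spec x j); destruct (Nat.eqb_spec x j);
        try lia; lra. }
    simpl. rewrite IHj by lia.
    pose proof (fire_char j (A - Pj j) ltac:(lia) eq_refl) as Hc.
    destruct (Rle_dec (pow2 (emax - Z.of_nat j)) (A - Pj j)) as [h|h].
    + rewrite HPS, rsum_eq_in by (auto; apply Hc; auto). unfold fpw; lra.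
    + rewrite HPS, rsum_eq_nin by (intro; apply h, Hc; auto). lra.
Qed.

Lemma core j : (j <= D)%nat ->
  (pow2 (emax - Z.of_nat j) <= umulti emax A j <-> In j Sl).
Proof. intros; apply fire_char; auto. apply umulti_inv; lia. Qed.
End Core.

Lemma same_set emin emax D S1 S2 : Z.of_nat D = (emax - emin)%Z ->
  NoDup S1 -> (forall s, In s S1 -> (s <= D)%nat) ->
  NoDup S2 -> (forall s, In s S2 -> (s <= D)%nat) ->
  rsum (fpw emax) S1 = rsum (fpw emax) S2 ->
  forall j, (j <= D)%nat -> (In j S1 <-> In j S2).
Proof.
  intros HD N1 B1 N2 B2 He j Hj.
  pose proof (pow2_pos emin).
  rewrite <- (core emin emax D S1 (rsum (fpw emax) S1)); auto; [|lra].
  rewrite <- (core emin emax D S2 (rsum (fpw emax) S1)); auto; [tauto|lra].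
Qed.

Fixpoint usingle (emax : Z) (A : R) (j : nat) : R :=
  match j with
  | O => A
  | S j' => let u := usingle emax A j' in
      if Rle_dec (pow2 (emax - Z.of_nat j')) u then 0 else u
  end.

Lemma umulti_low emin emax D A : Z.of_nat D = (emax - emin)%Z -> A < pow2 emin ->
  forall j, (j <= S D)%nat -> umulti emax A j = A.
Proof.
  intros HD HA; induction j; intros Hj; simpl; auto.
  rewrite IHj by lia. destruct Rle_dec; auto.
  pose proof (pow2_le emin (emax - Z.of_nat j) ltac:(lia)). lra.
Qed.

Lemma usingle_low emin emax D A : Z.of_nat D = (emax - emin)%Z -> A < pow2 emin ->
  forall j, (j <= S D)%nat -> usingle emax A j = A.
Proof.
  intros HD HA; induction j; intros Hj; simpl; auto.
  rewrite IHj by lia. destruct Rle_dec; auto.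
  pose proof (pow2_le emin (emax - Z.of_nat j) ltac:(lia)). lra.
Qed.

Lemma umulti_sat emax A : pow2 (emax + 1) <= A ->
  forall j, pow2 (emax + 1 - Z.of_nat j) <= umulti emax A j.
Proof.
  intros HA; induction j; cbn [umulti].
  - change (Z.of_nat 0) with 0%Z. replace (emax + 1 - 0)%Z with (emax + 1)%Z by lia; auto.
  - replace (emax + 1 - Z.of_nat j)%Z with (emax - Z.of_nat j + 1)%Z in IHj by lia.
    rewrite pow2_S in IHj.
    replace (emax + 1 - Z.of_nat (S j))%Z with (emax - Z.of_nat j)%Z by lia.
    destruct Rle_dec; [lra|]. pose proof (pow2_pos (emax - Z.of_nat j)). lra.
Qed.

Lemma usingle_S emax A j : usingle emax A (S j) =
  if Rle_dec (pow2 (emax - Z.of_nat j)) (usingle emax A j) then 0 else usingle emax A j.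
Proof. reflexivity. Qed.

Lemma single_char emax A e s0 : Z.of_nat s0 = (emax - e)%Z -> pow2 e <= A ->
  (forall j, (j < s0)%nat -> A < pow2 (emax - Z.of_nat j)) ->
  forall j, (pow2 (emax - Z.of_nat j) <= usingle emax A j <-> j = s0).
Proof.
  intros Hs He Hlt.
  assert (H1 : forall j, (j <= s0)%nat -> usingle emax A j = A).
  { induction j; intros; simpl; auto. rewrite IHj by lia.
    destruct Rle_dec; auto. specialize (Hlt j ltac:(lia)). lra. }
  assert (H2 : forall m, usingle emax A (S (s0 + m)) = 0).
  { induction m.
    - rewrite Nat.add_0_r. cbn [usingle]. rewrite H1 by lia. destruct Rle_dec; auto.
      replace (emax - Z.of_nat s0)%Z with e in n by lia. lra.
    - replace (s0 + S m)%nat with (S (s0 + m)) by lia. rewrite usingle_S.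
      rewrite IHm. destruct Rle_dec; auto. }
  intros j. destruct (lt_eq_lt_dec j s0) as [[h|h]|h].
  - rewrite H1 by lia. specialize (Hlt j h). split; intros; [lra|lia].
  - subst. rewrite H1 by lia. replace (emax - Z.of_nat s0)%Z with e by lia. tauto.
  - replace j with (S (s0 + (j - S s0)))%nat by lia. rewrite H2.
    pose proof (pow2_pos (emax - Z.of_nat (S (s0 + (j - S s0))))). split; intros; [lra|lia].
Qed.

Lemma Vs_eq einmin einmax n w Fin N :
  Z.of_nat N = (einmax - einmin + 1)%Z ->
  (forall i t, (i < n)%nat -> In t (Fin i) -> (t < N)%nat) ->
  forall j, Vsyn einmin n w Fin (N - 1 + j) =
    pow2 (Z.of_nat j) * rsum (fun i => w i * LTC_decode einmax (Fin i)) (seq 0 n).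
Proof.
  intros HN HF j. unfold Vsyn. rewrite <- rsum_scale. apply rsum_ext_in.
  intros i Hi. apply in_seq in Hi.
  assert (E : h_psp einmin (Fin i) (N - 1 + j) = pow2 (Z.of_nat j) * LTC_decode einmax (Fin i)).
  2:{ rewrite E. ring. }
  unfold h_psp, LTC_decode. rewrite <- rsum_scale. apply rsum_ext_in. intros t Ht.
  specialize (HF i t ltac:(lia) Ht).
  unfold psp. destruct (Z.leb_spec 0 (Z.of_nat (N - 1 + j) - Z.of_nat t)); [|lia].
  rewrite <- !pow2_add. f_equal. lia.
Qed.

Lemma Vpre_of_app Vs hs t0 c t :
  Vpre_of Vs (hs ++ (t0, c) :: nil) t = Vpre_of Vs hs t - c * pow2 (Z.of_nat t - Z.of_nat t0).
Proof. unfold Vpre_of. rewrite rsum_app. simpl. lra. Qed.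

Lemma Vpre_of_double Vs hs t : Vs (S t) = 2 * Vs t ->
  Vpre_of Vs hs (S t) = 2 * Vpre_of Vs hs t.
Proof.
  intros H. unfold Vpre_of. rewrite H.
  rewrite (rsum_ext_in _ (fun p => 2 * (- snd p * pow2 (Z.of_nat t - Z.of_nat (fst p))))).
  - rewrite rsum_scale. lra.
  - intros p _. replace (Z.of_nat (S t) - Z.of_nat (fst p))%Z with
      ((Z.of_nat t - Z.of_nat (fst p)) + 1)%Z by lia. rewrite pow2_S. lra.
Qed.

Lemma hist_nil k einmin eoutmax n w Fin N :
  (forall t, (t + 2 <= N)%nat -> ~ ef_fires k einmin eoutmax n w Fin t) ->
  forall t, (t <= N - 1)%nat -> out_hist k (pow2 eoutmax) (Vsyn einmin n w Fin) t = nil.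
Proof.
  intros H; induction t; intros Ht; simpl; auto.
  rewrite IHt by lia. destruct Rle_dec as [h|h]; auto.
  exfalso. apply (H t ltac:(lia)). unfold ef_fires, Vpre. rewrite IHt by lia. auto.
Qed.

Lemma Vpre_step k Vth Vs t : Vs (S t) = 2 * Vs t ->
  Vpre k Vth Vs (S t) =
  if Rle_dec Vth (Vpre k Vth Vs t)
  then 2 * Vpre k Vth Vs t - 2 * (match k with MultiSpike => Vth | SingleSpike => Vpre k Vth Vs t end)
  else 2 * Vpre k Vth Vs t.
Proof.
  intros H. unfold Vpre. cbn [out_hist].
  destruct Rle_dec as [h|h].
  - rewrite Vpre_of_app, Vpre_of_double by auto.
    replace (Z.of_nat (S t) - Z.of_nat t)%Z with 1%Z by lia. rewrite pow2_1. lra.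
  - apply Vpre_of_double; auto.
Qed.

Lemma scale_iff emax j u : pow2 emax <= pow2 (Z.of_nat j) * u <-> pow2 (emax - Z.of_nat j) <= u.
Proof.
  replace (pow2 emax) with (pow2 (Z.of_nat j) * pow2 (emax - Z.of_nat j)).
  2:{ rewrite <- pow2_add. f_equal; lia. }
  pose proof (pow2_pos (Z.of_nat j)). split; intros.
  - apply Rmult_le_reg_l in H0; auto.
  - apply Rmult_le_compat_l; lra.
Qed.

Section Neuron.
Variables (k : ef_kind) (einmin einmax eoutmax : Z) (n : nat) (w : nat -> R)
  (Fin : nat -> list nat) (N : nat).
Hypothesis HN : Z.of_nat N = (einmax - einmin + 1)%Z.
Hypothesis HF : forall i t, (i < n)%nat -> In t (Fin i) -> (t < N)%nat.
Hypothesis Hno : forall t, (t + 2 <= N)%nat -> ~ ef_fires k einmin eoutmax n w Fin t.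
Let A0 := rsum (fun i => w i * LTC_decode einmax (Fin i)) (seq 0 n).
Let Vs := Vsyn einmin n w Fin.
Let Vth := pow2 eoutmax.

Lemma Vs_double j : Vs (S (N - 1 + j)) = 2 * Vs (N - 1 + j).
Proof.
  unfold Vs. replace (S (N - 1 + j)) with (N - 1 + S j)%nat by lia.
  rewrite !(Vs_eq einmin einmax n w Fin N HN HF).
  replace (Z.of_nat (S j)) with (Z.of_nat j + 1)%Z by lia. rewrite pow2_S. lra.
Qed.

Lemma Vpre0 : Vpre k Vth Vs (N - 1) = A0.
Proof.
  unfold Vpre, Vth, Vs. rewrite (hist_nil k einmin eoutmax n w Fin N Hno) by lia.
  unfold Vpre_of. simpl. rewrite Rplus_0_r.
  pose proof (Vs_eq einmin einmax n w Fin N HN HF 0) as E.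
  rewrite Nat.add_0_r in E. rewrite E. simpl. unfold pow2. simpl. unfold A0. lra.
Qed.

Lemma Vpre_multi : k = MultiSpike -> forall j,
  Vpre k Vth Vs (N - 1 + j) = pow2 (Z.of_nat j) * umulti eoutmax A0 j.
Proof.
  intros Hk. induction j.
  - rewrite Nat.add_0_r, Vpre0. simpl. unfold pow2; simpl. lra.
  - replace (N - 1 + S j)%nat with (S (N - 1 + j)) by lia.
    rewrite Vpre_step by apply Vs_double. rewrite IHj. subst k.
    cbn [umulti]. pose proof (scale_iff eoutmax j (umulti eoutmax A0 j)).
    replace (Z.of_nat (S j)) with (Z.of_nat j + 1)%Z by lia. rewrite pow2_S.
    replace (pow2 eoutmax) with (pow2 (Z.of_nat j) * pow2 (eoutmax - Z.of_nat j)) in *.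
    2:{ rewrite <- pow2_add. f_equal; lia. }
    unfold Vth. replace (pow2 eoutmax) with (pow2 (Z.of_nat j) * pow2 (eoutmax - Z.of_nat j)).
    2:{ rewrite <- pow2_add. f_equal; lia. }
    destruct Rle_dec as [h|h]; destruct Rle_dec as [h'|h']; try tauto; lra.
Qed.

Lemma Vpre_single : k = SingleSpike -> forall j,
  Vpre k Vth Vs (N - 1 + j) = pow2 (Z.of_nat j) * usingle eoutmax A0 j.
Proof.
  intros Hk. induction j.
  - rewrite Nat.add_0_r, Vpre0. simpl. unfold pow2; simpl. lra.
  - replace (N - 1 + S j)%nat with (S (N - 1 + j)) by lia.
    rewrite Vpre_step by apply Vs_double. rewrite IHj. subst k.
    rewrite usingle_S. pose proof (scale_iff eoutmax j (usingle eoutmax A0 j)).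
    replace (Z.of_nat (S j)) with (Z.of_nat j + 1)%Z by lia. rewrite pow2_S.
    unfold Vth.
    destruct Rle_dec as [h|h]; destruct Rle_dec as [h'|h']; try tauto; lra.
Qed.
End Neuron.

Lemma log_bounds A : 0 < A ->
  pow2 (Int_part (ln A / ln 2)) <= A < pow2 (Int_part (ln A / ln 2) + 1).
Proof.
  intros HA. set (L := ln A / ln 2).
  assert (Hl2 : 0 < ln 2) by (pose proof ln_lt_2; lra).
  assert (EA : A = Rpower 2 L).
  { unfold Rpower, L. replace (ln A / ln 2 * ln 2) with (ln A) by (field; lra).
    rewrite exp_ln; auto. }
  destruct (base_Int_part L) as [h1 h2].
  rewrite !pow2_R, plus_IZR. rewrite EA. split.
  - apply Rle_Rpower; lra.
  - apply Rpower_lt; lra.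
Qed.

Lemma single_list_bound D s0 : (s0 <= D)%nat -> forall s, In s (s0 :: nil) -> (s <= D)%nat.
Proof. intros H s [<-|[]]; auto. Qed.

Theorem theorem1 (k : ef_kind) (einmin einmax eoutmin eoutmax : Z)
  (n : nat) (w : nat -> R) (Fin : nat -> list nat) (S : list nat) :
  (einmin <= einmax)%Z ->
  (eoutmin <= eoutmax)%Z ->
  (forall i, (i < n)%nat -> NoDup (Fin i)) ->
  (forall i t, (i < n)%nat -> In t (Fin i) -> (t < Tin einmin einmax)%nat) ->
  (forall t, (t + 2 <= Tin einmin einmax)%nat ->
     ~ ef_fires k einmin eoutmax n w Fin t) ->
  is_LTC k eoutmin eoutmax (relu_out einmax n w Fin) S ->
  forall t,
    (Tin einmin einmax - 1 <= t)%nat ->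
    (t <= Tin einmin einmax + Tout eoutmin eoutmax - 2)%nat ->
    (ef_fires k einmin eoutmax n w Fin t <->
     exists s, In s S /\ t = (Tin einmin einmax - 1 + s)%nat).
Proof.
  intros Hi Ho _ HF Hno [HNd [Hbd Hsum]] t Ht1 Ht2.
  set (N := Tin einmin einmax) in *.
  assert (HN : Z.of_nat N = (einmax - einmin + 1)%Z) by (unfold N, Tin; rewrite Z2Nat.id; lia).
  set (D := (Tout eoutmin eoutmax - 1)%nat).
  assert (HD : Z.of_nat D = (eoutmax - eoutmin)%Z)
    by (unfold D, Tout; rewrite Nat2Z.inj_sub, Z2Nat.id; lia).
  assert (HB : forall s, In s S -> (s <= D)%nat) by (intros s Hs; specialize (Hbd s Hs); lia).
  set (j := (t - (N - 1))%nat).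
  assert (Hj : (j <= D)%nat) by (unfold j, D; unfold Tout in *; lia).
  assert (Ht : t = (N - 1 + j)%nat) by (unfold j; lia).
  assert (HR : (exists s, In s S /\ t = (N - 1 + s)%nat) <-> In j S).
  { split. - intros [s [Hs ->]]. replace j with s by (unfold j; lia). auto.
    - intros; exists j; split; auto. }
  rewrite HR. clear HR. rewrite Ht. unfold ef_fires.
  set (A0 := rsum (fun i => w i * LTC_decode einmax (Fin i)) (seq 0 n)).
  unfold relu_out in Hsum. fold A0 in Hsum.
  assert (HA0 : A0 <= Rmax A0 0) by apply Rmax_l.
  assert (Hpos : forall x, 0 < x -> x <= Rmax A0 0 -> Rmax A0 0 = A0).
  { intros x hx hy. unfold Rmax in *. destruct Rle_dec; lra. }
  change (fun s => pow2 (eoutmax - Z.of_nat s)) with (fpw eoutmax) in Hsum.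
  assert (Hpe : pow2 eoutmin <= pow2 (eoutmax - Z.of_nat j)) by (apply pow2_le; lia).
  assert (Hpp := pow2_pos eoutmin).
  assert (Low : Rmax A0 0 < pow2 eoutmin -> ~ In j S).
  { intros hl hin. assert (rsum (fpw eoutmax) S = rsum (fpw eoutmax) nil) as E.
    { rewrite Hsum. destruct k; simpl; unfold LA_multi, LA_single;
      destruct Rlt_dec; simpl; lra. }
    apply (same_set eoutmin eoutmax D S nil HD HNd HB (NoDup_nil _)
      ltac:(simpl; tauto) E j Hj) in hin. exact hin. }
  destruct k.
  - rewrite (Vpre_multi MultiSpike einmin einmax eoutmax n w Fin N HN HF Hno eq_refl j).
    rewrite scale_iff. fold A0. simpl LA in Hsum. unfold LA_multi in Hsum.
    destruct (Rlt_dec (Rmax A0 0) (pow2 eoutmin)) as [hl|hl].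
    { rewrite (umulti_low eoutmin eoutmax D A0 HD ltac:(lra) j ltac:(lia)).
      split; intros; [lra|]. exfalso; apply (Low hl); auto. }
    rewrite (Hpos (pow2 eoutmin)) in * by lra.
    destruct (Rlt_dec A0 (pow2 (eoutmax + 1))) as [hm|hm].
    + apply (core eoutmin eoutmax D S A0 HD HNd HB); auto.
      rewrite Hsum. set (p := pow2 eoutmin) in *.
      destruct (base_Int_part (A0 / p)) as [b1 b2].
      assert (A0 = A0 / p * p) by (field; lra).
      split; nra.
    + assert (Hall : In j (seq 0 (Datatypes.S D))) by (apply in_seq; lia).
      assert (E : rsum (fpw eoutmax) S = rsum (fpw eoutmax) (seq 0 (Datatypes.S D))).
      { rewrite Hsum. unfold fpw. rewrite geom.
        f_equal; apply f_equal; lia. }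
      rewrite (same_set eoutmin eoutmax D S (seq 0 (Datatypes.S D)) HD HNd HB (seq_NoDup _ _)
        ltac:(intros s hs; apply in_seq in hs; lia) E j Hj).
      split; auto; intros _.
      pose proof (umulti_sat eoutmax A0 ltac:(lra) j).
      pose proof (pow2_le (eoutmax - Z.of_nat j) (eoutmax + 1 - Z.of_nat j) ltac:(lia)). lra.
  - rewrite (Vpre_single SingleSpike einmin einmax eoutmax n w Fin N HN HF Hno eq_refl j).
    rewrite scale_iff. fold A0. simpl LA in Hsum. unfold LA_single in Hsum.
    destruct (Rlt_dec (Rmax A0 0) (pow2 eoutmin)) as [hl|hl].
    { rewrite (usingle_low eoutmin eoutmax D A0 HD ltac:(lra) j ltac:(lia)).
      split; intros; [lra|]. exfalso; apply (Low hl); auto. }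
    rewrite (Hpos (pow2 eoutmin)) in * by lra.
    assert (Key : forall e, (eoutmin <= e <= eoutmax)%Z -> pow2 e <= A0 ->
      (forall j, (j < Z.to_nat (eoutmax - e))%nat -> A0 < pow2 (eoutmax - Z.of_nat j)) ->
      rsum (fpw eoutmax) S = pow2 e ->
      (pow2 (eoutmax - Z.of_nat j) <= usingle eoutmax A0 j <-> In j S)).
    { intros e He Hle Hlt Hs.
      rewrite (single_char eoutmax A0 e (Z.to_nat (eoutmax - e)) ltac:(lia) Hle Hlt j).
      assert (E : rsum (fpw eoutmax) S = rsum (fpw eoutmax) (Z.to_nat (eoutmax - e) :: nil)).
      { rewrite Hs. simpl. unfold fpw. rewrite Rplus_0_r. f_equal. lia. }
      rewrite (same_set eoutmin eoutmax D S (Z.to_nat (eoutmax - e) :: nil) HD HNd HB (NoDup_cons _ (@in_nil nat _) (NoDup_nil _))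
        (single_list_bound D (Z.to_nat (eoutmax - e)) ltac:(lia)) E j Hj).
      simpl. intuition. }
    destruct (Rlt_dec A0 (pow2 (eoutmax + 1))) as [hm|hm].
    + set (e := Int_part (ln A0 / ln 2)) in *.
      destruct (log_bounds A0 ltac:(lra)) as [l1 l2]. fold e in l1, l2.
      assert (He1 : (eoutmin <= e)%Z).
      { destruct (Z_le_gt_dec eoutmin e); auto. pose proof (pow2_le (e + 1) eoutmin ltac:(lia)). lra. }
      assert (He2 : (e <= eoutmax)%Z).
      { destruct (Z_le_gt_dec e eoutmax); auto. pose proof (pow2_le (eoutmax + 1) e ltac:(lia)). lra. }
      apply (Key e); auto.
      intros j' hj'. pose proof (pow2_le (e + 1) (eoutmax - Z.of_nat j') ltac:(lia)). lra.
    + apply (Key eoutmax); auto; try lia.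
      pose proof (pow2_le eoutmax (eoutmax + 1) ltac:(lia)). lra.
Qed.
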